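(* For all $a\in\mathbb{R}$ and $y>0$, $$\frac{\Gamma(a,y)}{\Gamma(a-1,y)}>y.$$
   Context: $\Gamma(a,y)=\int_y^{\infty} t^{a-1}e^{-t}\,dt$ is the upper incomplete gamma function, defined for all real $a$ when $y>0$. *)

(* Defs.v *)
From Stdlib Require Import Reals.
From Coquelicot Require Import Coquelicot.
Open Scope R_scope.

Definition upper_inc_gamma (a y : R) : R :=
  RInt_gen (fun t => Rpower t (a - 1) * exp (- t)) (at_point y) (Rbar_locally p_infty).

(* Main.v *)
Require Import Defs.
From Stdlib Require Import Classical_Prop.
From Stdlib Require Import Reals Lra.
From Coquelicot Require Import Coquelicot.
Open Scope R_scope.

Lemma conv (h : R -> R) (y M : R) : 0 < y ->
  (forall t, y <= t -> continuous h t) -> (forall t, y <= t -> 0 <= h t) ->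
  (forall t, y <= t -> h t <= M * exp (-t/2)) ->
  exists l, is_RInt_gen h (at_point y) (Rbar_locally p_infty) l /\
            forall x, y <= x -> RInt h y x <= l.
Proof.
  intros hy hc hp hb.
  assert (exR : forall x1 x2, y <= x1 <= x2 -> ex_RInt h x1 x2).
  { intros x1 x2 H; apply (@ex_RInt_continuous R_CompleteNormedModule); intros z Hz; apply hc.
    rewrite Rmin_left in Hz by lra; lra. }
  assert (HM : 0 <= M).
  { pose proof (hp y (Rle_refl _)); pose proof (hb y (Rle_refl _)).
    pose proof (exp_pos (-y/2)). nra. }
  set (F := fun x => RInt h y x).
  assert (mono : forall x1 x2, y <= x1 <= x2 -> F x1 <= F x2).
  { intros x1 x2 H. unfold F.
    rewrite <- (RInt_Chasles h y x1 x2) by (apply exR; lra).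
    assert (0 <= RInt h x1 x2).
    { apply RInt_ge_0; [lra| apply exR; lra |]. intros; apply hp; lra. }
    unfold plus; simpl. lra. }
  assert (bnd : forall x, y <= x -> F x <= 2 * M * exp (-y/2)).
  { intros x Hx. unfold F.
    assert (Hi : is_RInt (fun t => M * exp (-t/2)) y x
       (minus ((fun t => -2 * M * exp (-t/2)) x) ((fun t => -2 * M * exp (-t/2)) y))).
    { apply (@is_RInt_derive R_CompleteNormedModule (fun t => -2 * M * exp (-t/2)) (fun t => M * exp (-t/2))).
      - intros z _. auto_derive; [auto| unfold Rdiv; field].
      - intros z _. apply (ex_derive_continuous (fun t => M * exp (-t/2))). auto_derive; auto. }
    apply Rle_trans with (RInt (fun t => M * exp (-t/2)) y x).
    { apply RInt_le; [lra | apply exR; lra | eexists; exact Hi |].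
      intros; apply hb; lra. }
    rewrite (is_RInt_unique _ _ _ _ Hi). unfold minus, plus, opp; simpl.
    pose proof (exp_pos (-x/2)). nra. }
  set (E := fun r => exists x, y <= x /\ r = F x).
  destruct (completeness E) as [l [Hub Hlub]].
  { exists (2 * M * exp (-y/2)). intros r [x [Hx ->]]. apply bnd; auto. }
  { exists (F y). exists y; split; [lra|auto]. }
  exists l. split.
  2:{ intros x Hx. apply Hub. exists x; auto. }
  intros P [eps Heps].
  assert (Hx0 : exists x0, y <= x0 /\ l - eps < F x0).
  { destruct (Classical_Prop.classic (exists x0, y <= x0 /\ l - eps < F x0)) as [H|H]; auto.
    exfalso. assert (l <= l - eps).
    { apply Hlub. intros r [x [Hx ->]].
      destruct (Rle_or_lt (F x) (l - eps)); auto. exfalso; apply H; exists x; auto. }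
    destruct eps; simpl in *; lra. }
  destruct Hx0 as [x0 [Hx0 Hlt]].
  unfold filtermapi.
  apply (Filter_prod _ _ _ (fun a => a = y) (fun b => x0 < b)).
  - reflexivity.
  - exists x0. auto.
  - intros a b -> Hb. exists (F b). split.
    + apply (@RInt_correct R_CompleteNormedModule), exR; simpl; lra.
    + apply Heps. unfold ball; simpl. unfold AbsRing_ball. unfold abs, minus, plus, opp; simpl.
      assert (F b <= l) by (apply Hub; exists b; split; [lra|auto]).
      assert (F x0 <= F b) by (apply mono; lra).
      rewrite Rabs_left1 by lra. lra.
Qed.

Definition fg (c t : R) : R := Rpower t c * exp (- t).

Lemma exp_le' x y : x <= y -> exp x <= exp y.
Proof. intros [H|H]; [left; apply exp_increasing; auto | rewrite H; lra]. Qed.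

Lemma ln_le' x y : 0 < x -> x <= y -> ln x <= ln y.
Proof. intros Hx [H|H]; [left; apply ln_increasing; auto | rewrite H; lra]. Qed.

Lemma fg_cont c t : 0 < t -> continuous (fg c) t.
Proof.
  intros Ht. apply (ex_derive_continuous (fg c)). unfold fg, Rpower.
  auto_derive; auto.
Qed.

Lemma fg_pos c t : 0 < t -> 0 < fg c t.
Proof. intros; unfold fg, Rpower. apply Rmult_lt_0_compat; apply exp_pos. Qed.

Lemma fg_bound c y : 0 < y -> exists M, forall t, y <= t -> fg c t <= M * exp (- t / 2).
Proof.
  intros hy.
  assert (HK : exists K, forall t, y <= t -> c * ln t <= K + t / 2).
  { destruct (Rle_or_lt c 0) as [Hc|Hc].
    - exists (c * ln y). intros t Ht. pose proof (ln_le' y t hy Ht). nra.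
    - exists (c * (ln (2 * c) - 1)). intros t Ht.
      pose proof (exp_ineq1_le (ln (t / (2 * c)))) as H.
      rewrite exp_ln in H by (apply Rdiv_lt_0_compat; lra).
      unfold Rdiv in H. rewrite ln_mult in H by (try apply Rinv_0_lt_compat; lra).
      rewrite ln_Rinv in H by lra.
      assert (c * (1 + (ln t + - ln (2 * c))) <= c * (t * / (2 * c))) by (apply Rmult_le_compat_l; lra).
      replace (c * (t * / (2 * c))) with (t / 2) in H0 by (field; lra). lra. }
  destruct HK as [K HK]. exists (exp K). intros t Ht. unfold fg, Rpower.
  rewrite <- !exp_plus. apply exp_le'. specialize (HK t Ht). lra.
Qed.

Lemma uniq (f : R -> R) (y l : R) :
  is_RInt_gen f (at_point y) (Rbar_locally p_infty) l ->
  RInt_gen f (at_point y) (Rbar_locally p_infty) = l.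
Proof.
  intros H.
  exact (@is_RInt_gen_unique R_CompleteNormedModule _ _
    (Proper_StrongProper _ (at_point_filter y))
    (Proper_StrongProper _ (Rbar_locally_filter p_infty)) f l H).
Qed.

Theorem main (a y : R) (hy : 0 < y) :
  RInt_gen (fg (a-1)) (at_point y) (Rbar_locally p_infty) /
  RInt_gen (fg (a-1-1)) (at_point y) (Rbar_locally p_infty) > y.
Proof.
  set (A := fg (a-1)). set (B := fg (a-1-1)).
  set (d := fun t => A t - y * B t).
  assert (Hd : forall t, 0 < t -> d t = (t - y) * B t).
  { intros t Ht. unfold d, A, B, fg.
    replace (a - 1) with (1 + (a - 1 - 1)) at 1 by ring.
    rewrite Rpower_plus, Rpower_1 by auto. ring. }
  destruct (fg_bound (a-1) y hy) as [MA HMA].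
  destruct (fg_bound (a-1-1) y hy) as [MB HMB].
  destruct (conv A y MA hy) as [lA [HA _]].
  { intros; apply fg_cont; lra. }
  { intros; left; apply fg_pos; lra. }
  { exact HMA. }
  destruct (conv B y MB hy) as [lB [HB HBle]].
  { intros; apply fg_cont; lra. }
  { intros; left; apply fg_pos; lra. }
  { exact HMB. }
  assert (Bcont : forall t, 0 < t -> continuous B t) by (intros; apply fg_cont; auto).
  assert (dcont : forall t, 0 < t -> continuous d t).
  { intros t Ht.
    apply (@continuous_minus R_UniformSpace R_AbsRing R_NormedModule A (fun t => scal y (B t)) t).
    - apply fg_cont; auto.
    - apply (@continuous_scal_r R_UniformSpace R_AbsRing R_NormedModule y B t). apply fg_cont; auto. }
  destruct (conv d y MA hy) as [ld [Hld Hldle]].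
  { intros; apply dcont; lra. }
  { intros t Ht. rewrite Hd by lra. apply Rmult_le_pos; [lra| left; apply fg_pos; lra]. }
  { intros t Ht. unfold d. assert (0 <= y * B t) by (apply Rmult_le_pos; [lra| left; apply fg_pos; lra]).
    pose proof (HMA t Ht). unfold A. lra. }
  assert (Hdiff : is_RInt_gen d (at_point y) (Rbar_locally p_infty) (minus lA (scal y lB))).
  { pose proof (@is_RInt_gen_scal R_NormedModule _ _ (@filter_filter _ _ (at_point_filter y)) (@filter_filter _ _ (Rbar_locally_filter p_infty)) B y lB HB) as HS.
    pose proof (@is_RInt_gen_minus R_NormedModule _ _ (@filter_filter _ _ (at_point_filter y)) (@filter_filter _ _ (Rbar_locally_filter p_infty)) A _ lA _ HA HS) as HM.
    exact HM. }
  assert (E1 : ld = lA - y * lB).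
  { rewrite <- (uniq d y ld Hld).
    rewrite (uniq d y _ Hdiff). reflexivity. }
  assert (P1 : 0 < RInt d y (y+1)).
  { apply RInt_gt_0; [lra| |].
    - intros t Ht. rewrite Hd by lra. apply Rmult_lt_0_compat; [lra| apply fg_pos; lra].
    - intros; apply dcont; lra. }
  assert (P2 : 0 < RInt B y (y+1)).
  { apply RInt_gt_0; [lra| |].
    - intros t Ht. apply fg_pos; lra.
    - intros; apply Bcont; lra. }
  pose proof (Hldle (y+1) ltac:(lra)). pose proof (HBle (y+1) ltac:(lra)).
  rewrite (uniq A y lA HA), (uniq B y lB HB).
  assert (0 < lB) by lra.
  unfold Rgt. apply (Rmult_lt_reg_r lB); auto. unfold Rdiv.
  rewrite Rmult_assoc, Rinv_l by lra. lra.
Qed.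

Theorem proposition5 (a y : R) (hy : 0 < y) :
  upper_inc_gamma a y / upper_inc_gamma (a - 1) y > y.
Proof.
  unfold upper_inc_gamma. exact (main a y hy).
Qed.
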